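(* Let $A$ be an antilinear operator on a complex $n$-dimensional space $W$, $\lambda>0$ real, $W_\lambda^{(k)}=\ker(A^2-\lambda^2 I)^k$ and $\widetilde W_\lambda^{(k)}=\{x\in W:(A-\lambda I)^kx=0\}$. If $v\in W_\lambda^{(k)}$, then there exist unique vectors $v_+,v_-\in\widetilde W_\lambda^{(k)}$ such that $v=v_++iv_-$.
   Context: An antilinear operator satisfies $A(zv+w)=\bar z Av+Aw$. *)

(* Defs.v *)
(* The complex field is modelled by an arbitrary
   numClosedFieldType C (algebraically closed field with conjugation z^*,
   imaginary unit 'i and order on reals); the complex n-dimensional space
   W is 'rV[C]_n. *)
From HB Require Import structures.
From mathcomp Require Import all_boot all_order all_algebra.
Set Implicit Arguments. Unset Strict Implicit. Unset Printing Implicit Defensive.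
Import Order.TTheory GRing.Theory Num.Theory.
Local Open Scope ring_scope.

Definition antilinear (C : numClosedFieldType) (n : nat)
  (A : 'rV[C]_n -> 'rV[C]_n) : Prop :=
  forall (z : C) (v w : 'rV[C]_n), A (z *: v + w) = z^* *: A v + A w.

Definition Wgen (C : numClosedFieldType) (n : nat)
  (A : 'rV[C]_n -> 'rV[C]_n) (lam : C) (k : nat) (v : 'rV[C]_n) : Prop :=
  iter k (fun x => A (A x) - lam ^+ 2 *: x) v = 0.

Definition Wtil (C : numClosedFieldType) (n : nat)
  (A : 'rV[C]_n -> 'rV[C]_n) (lam : C) (k : nat) (x : 'rV[C]_n) : Prop :=
  iter k (fun y => A y - lam *: y) x = 0.

(* Main.v *)
Require Import Defs.
From HB Require Import structures.
From mathcomp Require Import all_boot all_order all_algebra.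
Import Order.TTheory GRing.Theory Num.Theory.
Set Implicit Arguments. Unset Strict Implicit.
Local Open Scope ring_scope.

Lemma iter_add (K : fieldType) (V : lmodType K) (f : V -> V)
  (fD : forall x y, f (x + y) = f x + f y) a :
  forall x y, iter a f (x + y) = iter a f x + iter a f y.
Proof. elim: a => //= a IH x y; by rewrite IH fD. Qed.

Lemma f0 (K : fieldType) (V : lmodType K) (f : V -> V)
  (fD : forall x y, f (x + y) = f x + f y) : f 0 = 0.
Proof. have h := fD 0 0; rewrite addr0 in h; by apply: (addrI (f 0)); rewrite addr0 -h. Qed.

Lemma iter_0 (K : fieldType) (V : lmodType K) (f : V -> V)
  (fD : forall x y, f (x + y) = f x + f y) a : iter a f 0 = 0.
Proof. elim: a => //= a ->; exact: f0. Qed.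

Lemma iter_opp (K : fieldType) (V : lmodType K) (f : V -> V)
  (fD : forall x y, f (x + y) = f x + f y) a x : iter a f (- x) = - iter a f x.
Proof.
apply/eqP; rewrite -subr_eq0 opprK -iter_add // addNr; apply/eqP; exact: iter_0.
Qed.

Lemma iter_sc (K : fieldType) (V : lmodType K) (f : V -> V) s
  (fS : forall x, f (s *: x) = s *: f x) a x : iter a f (s *: x) = s *: iter a f x.
Proof. elim: a => //= a ->; exact: fS. Qed.

Lemma iter_comm (K : fieldType) (V : lmodType K) (f g : V -> V)
  (fg : forall x, f (g x) = g (f x)) a x : iter a f (g x) = g (iter a f x).
Proof. elim: a => //= a ->; exact: fg. Qed.

Section Gen.
Lemma uniq_gen (K : fieldType) (V : lmodType K) (f g : V -> V) (s : K)
  (fD : forall x y, f (x + y) = f x + f y)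
  (gD : forall x y, g (x + y) = g x + g y)
  (fg : forall x, f (g x) = g (f x))
  (hs : s != 0) (gf : forall x, g x - f x = s *: x) :
  forall a b x, iter a f x = 0 -> iter b g x = 0 -> x = 0.
Proof.
have fg' : forall x, g (f x) = f (g x) by move=> x; rewrite fg.
elim=> [|a IHa]; first by move=> b x /= ->.
elim=> [|b IHb] x ha hb; first by [].
have h1 : f x = 0.
  apply: (IHa b.+1); first by rewrite -iterSr.
  by rewrite (iter_comm fg') hb f0.
have h2 : g x = 0.
  apply: (IHb); last by rewrite -iterSr.
  by rewrite (iter_comm fg) ha f0.
have := gf x; rewrite h1 h2 subr0 => /esym /eqP.
by rewrite scaler_eq0 (negbTE hs) /= => /eqP.
Qed.

Lemma exist_gen (K : fieldType) (V : lmodType K) (f g : V -> V) (s : K)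
  (fD : forall x y, f (x + y) = f x + f y)
  (gD : forall x y, g (x + y) = g x + g y)
  (fS : forall x, f (s^-1 *: x) = s^-1 *: f x)
  (gS : forall x, g (s^-1 *: x) = s^-1 *: g x)
  (fg : forall x, f (g x) = g (f x))
  (hs : s != 0) (gf : forall x, g x - f x = s *: x) :
  forall a b v, iter a f (iter b g v) = 0 ->
    exists x y, [/\ iter a f x = 0, iter b g y = 0 & v = x + y].
Proof.
have fg' : forall x, g (f x) = f (g x) by move=> x; rewrite fg.
elim=> [|a IHa]; first by move=> b v /= h; exists 0, v; rewrite add0r.
elim=> [|b IHb] v h; first by exists v, 0; rewrite addr0.
have [x1 [y1 [hx1 hy1 e1]]] : exists x y, [/\ iter a.+1 f x = 0, iter b g y = 0 & g v = x + y].
  by apply: IHb; rewrite -(iterSr b g v).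
have [x2 [y2 [hx2 hy2 e2]]] : exists x y, [/\ iter a f x = 0, iter b.+1 g y = 0 & f v = x + y].
  by apply: (IHa b.+1); rewrite (iter_comm fg') -(iterSr a f).
exists (s^-1 *: (x1 - x2)), (s^-1 *: (y1 - y2)); split.
- by rewrite (iter_sc fS) (iter_add fD) (iter_opp fD) hx1 iterS hx2 (f0 fD) subr0 scaler0.
- by rewrite (iter_sc gS) (iter_add gD) (iter_opp gD) hy2 iterS hy1 (f0 gD) oppr0 addr0 scaler0.
- rewrite -scalerDr addrACA -opprD -e1 -e2 gf scalerA mulVf //; by rewrite scale1r.
Qed.
End Gen.

Lemma conjN (C : numClosedFieldType) (e:C) : (-e)^* = - e^*.
Proof. exact: (rmorphN _ e). Qed.

Lemma zhelp (V : zmodType) (a b c : V) : a - c = a + b - (b + c).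
Proof. by rewrite opprD addrA addrK. Qed.

Lemma zhelp2 (V : zmodType) (a b c : V) : b - c = a + b - c - a.
Proof. by rewrite addrAC [a + b]addrC addrK. Qed.

Lemma imag_iter (C : numClosedFieldType) (n : nat) (B D : 'rV[C]_n -> 'rV[C]_n)
  (hB : forall e z, e^* = - e -> B (e *: z) = - e *: D z) :
  forall k e y, e^* = - e -> iter k B (e *: y) = ((-1) ^+ k * e) *: iter k D y.
Proof.
elim=> [|k IH] e y he; first by rewrite expr0 mul1r.
rewrite iterSr hB // IH; last by rewrite conjN he.
by rewrite iterSr exprS mulN1r mulNr mulrN.
Qed.

Theorem mainTheorem6 (C : numClosedFieldType) (n : nat)
  (A : 'rV[C]_n -> 'rV[C]_n) (hA : antilinear A)
  (lam : C) (hlamR : lam \is Num.real) (hlam : 0 < lam)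
  (k : nat) (v : 'rV[C]_n) (hv : Wgen A lam k v) :
  exists! p : 'rV[C]_n * 'rV[C]_n,
    [/\ Wtil A lam k p.1, Wtil A lam k p.2 & v = p.1 + 'i *: p.2].
Proof.
have AD : forall x y, A (x + y) = A x + A y.
  by move=> x y; rewrite -{1}(scale1r x) hA conjC1 scale1r.
have AZ : forall c x, A (c *: x) = c^* *: A x.
  by move=> c x; rewrite -(addr0 (c *: x)) hA (f0 AD) addr0.
have lamc : lam^* = lam by apply: conj_Creal.
pose B := fun y => A y - lam *: y.
pose D := fun y => A y + lam *: y.
have BD : forall x y, B (x + y) = B x + B y.
  by move=> x y; rewrite /B AD scalerDr opprD addrACA.
have DD : forall x y, D (x + y) = D x + D y.
  by move=> x y; rewrite /D AD scalerDr addrACA.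
have rS : forall r x, r \is Num.real -> A (r *: x) = r *: A x.
  by move=> r x hr; rewrite AZ conj_Creal.
pose s := lam *+ 2.
have sR : s^-1 \is Num.real by rewrite rpredV rpredMn.
have hs : s != 0 by rewrite mulrn_eq0 /= gt_eqF.
have BS : forall x, B (s^-1 *: x) = s^-1 *: B x.
  by move=> x; rewrite /B rS // scalerBr !scalerA mulrC.
have DS : forall x, D (s^-1 *: x) = s^-1 *: D x.
  by move=> x; rewrite /D rS // scalerDr !scalerA mulrC.
have fg : forall x, B (D x) = D (B x).
  move=> x; rewrite /B /D AD (rS lam) // [A (_ - _)]AD.
  have -> : A (- (lam *: x)) = - (lam *: A x).
    by rewrite -scaleNr rS ?rpredN // scaleNr.
  rewrite !scalerDr scalerN; set a := A (A x); set b := lam *: A x.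
  set c := lam *: (lam *: x); by rewrite opprD !addrA addrK addrNK.
have gf : forall x, D x - B x = s *: x.
  by move=> x; rewrite /D /B opprD opprK addrACA subrr add0r -scalerDl -mulr2n.
have hW : iter k B (iter k D v) = 0.
  rewrite -hv /Wgen; elim: k {hv} => //= j IH.
  have e : forall x, A (A x) - lam ^+ 2 *: x = B (D x).
    move=> x; rewrite /B /D AD (rS lam) // scalerDr scalerA -expr2.
    exact: zhelp.
  by rewrite (iter_comm fg) -IH e.
have hB : forall e z, e^* = - e -> B (e *: z) = - e *: D z.
  move=> e z he; rewrite /B /D AZ he scalerDr !scalerA; congr (_ + _).
  by rewrite mulNr scaleNr mulrC.
have ii : 'i^* = - 'i :> C by rewrite conjCi.
have mii : (- 'i)^* = - - 'i :> C by rewrite conjN conjCi.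
have cnz : forall j, (-1) ^+ j * 'i != 0 :> C.
  move=> j; rewrite mulf_neq0 // ?signr_eq0 //.
  by apply/eqP=> h; have := mulCii C; rewrite h mul0r => /eqP; rewrite eq_sym oppr_eq0 oner_eq0.
have [x [y [hx hy ev]]] := exist_gen BD DD BS DS fg hs gf hW.
have hq : iter k B (- 'i *: y) = 0 by rewrite (imag_iter hB) // hy scaler0.
exists (x, - 'i *: y); split.
  split => //=; by rewrite ev scalerA mulrN mulCii opprK scale1r.
move=> [p1 p2] /= [h1 h2 e].
have hd : forall d, iter k B d = 0 -> iter k B ('i *: d) = 0 -> d = 0.
  move=> d hd1 hd2; apply: (uniq_gen BD DD fg hs gf hd1 (b:=k)).
  move: hd2; rewrite (imag_iter hB) // => /eqP; rewrite scaler_eq0 (negbTE (cnz k)) /=.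
  by move/eqP.
have e2 : p2 = - 'i *: y.
  apply/eqP; rewrite -subr_eq0; apply/eqP; apply: hd.
    by rewrite (iter_add BD) (iter_opp BD) h2 hq subrr.
  have -> : 'i *: (p2 - - 'i *: y) = x - p1.
    have hx' : x = p1 + 'i *: p2 - y by rewrite -e ev addrK.
    rewrite hx' scalerBr scalerA mulrN mulCii opprK scale1r.
    exact: zhelp2.
  by rewrite (iter_add BD) (iter_opp BD) hx h1 subrr.
by move: e; rewrite ev e2 scalerA mulrN mulCii opprK scale1r => /addIr ->.
Qed.
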